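(* Let $(X_{1,\infty},f_{1,\infty})$ be a topological nonautonomous dynamical system, $\mathcal{U}_{1,\infty}\in\mathcal{L}(X_{1,\infty})$, and assume that $f_{1,\infty}$ is equicontinuous. Then for each $m\ge1$ the sequence $\mathcal{V}_{1,\infty}$ defined by $\mathcal{V}_n:=\bigvee_{i=0}^{m-1}f_n^{-i}\mathcal{U}_{n+i}$ is an element of $\mathcal{L}(X_{1,\infty})$.
   Context: Topological NDS: compact metric spaces $(X_n,\varrho_n)$ and continuous maps $f_n:X_n\to X_{n+1}$; $f_n^i=f_{n+i-1}\circ\cdots\circ f_n$, $f_n^0=\mathrm{id}$, $f_n^{-i}\mathcal{U}=\{(f_n^i)^{-1}(U):U\in\mathcal{U}\}$; the join of covers consists of all intersections of one member from each. Equicontinuity: for every $\varepsilon>0$ there is $\delta>0$ with $\varrho_{n+1}(f_nx,f_ny)<\varepsilon$ whenever $\varrho_n(x,y)<\delta$, uniformly in $n$. The Lebesgue number of an open cover of a compact metric space is the maximal $\varepsilon>0$ such that every $\varepsilon$-ball lies in a member of the cover. $\mathcal{L}(X_{1,\infty})$ is the family of sequences $\{\mathcal{U}_n\}$, $\mathcal{U}_n$ an open cover of $X_n$, whose Lebesgue numbers are bounded away from zero uniformly in $n$. *)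

(* Defs.v *)
From Stdlib Require Import Reals List.
Open Scope R_scope.

Definition is_metric {T : Type} (rho : T -> T -> R) : Prop :=
  (forall x y, 0 <= rho x y) /\
  (forall x y, rho x y = 0 <-> x = y) /\
  (forall x y, rho x y = rho y x) /\
  (forall x y z, rho x z <= rho x y + rho y z).

Definition ball {T : Type} (rho : T -> T -> R) (x : T) (e : R) : T -> Prop :=
  fun y => rho x y < e.

Definition metric_open {T : Type} (rho : T -> T -> R) (O : T -> Prop) : Prop :=
  forall x, O x -> exists e, 0 < e /\ forall y, ball rho x e y -> O y.

Definition open_cover {T : Type} (rho : T -> T -> R) (U : (T -> Prop) -> Prop) : Prop :=
  (forall O, U O -> metric_open rho O) /\ (forall x, exists O, U O /\ O x).

Definition metric_compact {T : Type} (rho : T -> T -> R) : Prop :=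
  forall U, open_cover rho U ->
    exists l : list (T -> Prop), (forall O, In O l -> U O) /\
      (forall x, exists O, In O l /\ O x).

Definition metric_continuous {T S : Type} (rT : T -> T -> R) (rS : S -> S -> R)
  (f : T -> S) : Prop :=
  forall x e, 0 < e -> exists d, 0 < d /\ forall y, rT x y < d -> rS (f x) (f y) < e.

Definition TNDS (X : nat -> Type) (rho : forall n, X n -> X n -> R)
  (f : forall n, X n -> X (S n)) : Prop :=
  (forall n, is_metric (rho n)) /\ (forall n, metric_compact (rho n)) /\
  (forall n, metric_continuous (rho n) (rho (S n)) (f n)).

Definition equicontinuous (X : nat -> Type) (rho : forall n, X n -> X n -> R)
  (f : forall n, X n -> X (S n)) : Prop :=
  forall e, 0 < e -> exists d, 0 < d /\
    forall n x y, rho n x y < d -> rho (S n) (f n x) (f n y) < e.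

(* Iterates: fiter f n i = f_n^i : X n -> X (i + n)%nat  (note i + n, so that
   0 + n and (S i) + n reduce). *)
Fixpoint fiter (X : nat -> Type) (f : forall n, X n -> X (S n)) (n i : nat)
  : X n -> X (i + n)%nat :=
  match i as i0 return X n -> X (i0 + n)%nat with
  | O => fun x => x
  | S j => fun x => f (j + n)%nat (fiter X f n j x)
  end.

(* The family L(X_{1,oo}): sequences of open covers whose Lebesgue numbers are
   bounded away from zero uniformly in n, i.e. there is eps > 0 such that for
   every n every eps-ball of X n lies in a member of U n. *)
Definition in_L (X : nat -> Type) (rho : forall n, X n -> X n -> R)
  (U : forall n, (X n -> Prop) -> Prop) : Prop :=
  (forall n, open_cover (rho n) (U n)) /\
  exists eps, 0 < eps /\
    forall n x, exists O, U n O /\ forall y, ball (rho n) x eps y -> O y.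

(* Join V_n := \/_{i=0}^{m-1} f_n^{-i} U_{n+i}: all intersections
   \bigcap_{i<m} (f_n^i)^{-1}(W_i) with W_i in U_{n+i}. *)
Definition join_cover (X : nat -> Type) (f : forall n, X n -> X (S n))
  (U : forall n, (X n -> Prop) -> Prop) (m n : nat) : (X n -> Prop) -> Prop :=
  fun V => exists W : forall i, X (i + n)%nat -> Prop,
    (forall i, (i < m)%nat -> U (i + n)%nat (W i)) /\
    V = (fun x => forall i, (i < m)%nat -> W i (fiter X f n i x)).

(* Main.v *)
Require Import Defs.
From Stdlib Require Import Reals Lra Lia ClassicalEpsilon.
Open Scope R_scope.

Lemma fin_min (m : nat) (P : nat -> R -> Prop) :
  (forall i e e', P i e -> 0 < e' <= e -> P i e') ->
  (forall i, (i < m)%nat -> exists e, 0 < e /\ P i e) ->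
  exists e, 0 < e /\ forall i, (i < m)%nat -> P i e.
Proof.
  intros Hmon. induction m as [|m IH]; intros H.
  - exists 1. split; [lra|]. intros i Hi; lia.
  - destruct IH as [e1 [He1 P1]]. { intros i Hi. apply H. lia. }
    destruct (H m (Nat.lt_succ_diag_r m)) as [e2 [He2 P2]].
    exists (Rmin e1 e2). split. { apply Rmin_glb_lt; lra. }
    intros i Hi. destruct (Nat.eq_dec i m) as [->|Hne].
    + apply Hmon with e2; auto. split. apply Rmin_glb_lt; lra. apply Rmin_r.
    + apply Hmon with e1. apply P1; lia. split. apply Rmin_glb_lt; lra. apply Rmin_l.
Qed.

Lemma fiter_cont X rho f :
  (forall n, metric_continuous (rho n) (rho (S n)) (f n)) ->
  forall i n, metric_continuous (rho n) (rho (i + n)%nat) (fiter X f n i).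
Proof.
  intros Hf. induction i as [|i IH]; intros n x e He.
  - exists e. split; auto.
  - destruct (Hf (i+n)%nat (fiter X f n i x) e He) as [d1 [Hd1 H1]].
    destruct (IH n x d1 Hd1) as [d [Hd H2]].
    exists d. split; auto. intros y Hy. simpl. apply H1. apply H2. exact Hy.
Qed.

Lemma fiter_equi X rho f :
  equicontinuous X rho f ->
  forall i e, 0 < e -> exists d, 0 < d /\
    forall n x y, rho n x y < d -> rho (i + n)%nat (fiter X f n i x) (fiter X f n i y) < e.
Proof.
  intros Hf. induction i as [|i IH]; intros e He.
  - exists e. split; auto.
  - destruct (Hf e He) as [d1 [Hd1 H1]].
    destruct (IH d1 Hd1) as [d [Hd H2]].
    exists d. split; auto. intros n x y Hy. simpl. apply H1. apply H2. exact Hy.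
Qed.

Theorem mainTheorem13 (X : nat -> Type) (rho : forall n, X n -> X n -> R)
  (f : forall n, X n -> X (S n)) (U : forall n, (X n -> Prop) -> Prop) :
  TNDS X rho f -> in_L X rho U -> equicontinuous X rho f ->
  forall m : nat, (1 <= m)%nat -> in_L X rho (join_cover X f U m).
Proof.
  intros [Hmet [Hcomp Hcont]] [HU [eps [Heps HL]]] Heq m _.
  split.
  - intros n. split.
    + intros V [W [HW ->]] x Hx.
      destruct (fin_min m (fun i e => forall y, ball (rho n) x e y -> W i (fiter X f n i y)))
        as [e [He He']].
      * intros i e e' Hp He' y Hy. apply Hp. unfold ball in *. lra.
      * intros i Hi.
        destruct (proj1 (HU (i+n)%nat) (W i) (HW i Hi) (fiter X f n i x) (Hx i Hi))
          as [e1 [He1 Ho]].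
        destruct (fiter_cont X rho f Hcont i n x e1 He1) as [d [Hd Hc]].
        exists d. split; auto. intros y Hy. apply Ho. apply Hc. exact Hy.
      * exists e. split; [exact He|]. intros y Hy i Hi. apply He'; auto.
    + intros x.
      assert (H : forall i, {O | U (i+n)%nat O /\ O (fiter X f n i x)}).
      { intros i. apply constructive_indefinite_description.
        exact (proj2 (HU (i+n)%nat) (fiter X f n i x)). }
      exists (fun x' => forall i, (i < m)%nat -> proj1_sig (H i) (fiter X f n i x')).
      split.
      * exists (fun i => proj1_sig (H i)). split; auto.
        intros i _. exact (proj1 (proj2_sig (H i))).
      * intros i _. exact (proj2 (proj2_sig (H i))).
  - destruct (fin_min m (fun i d => forall n x y, rho n x y < d ->
        rho (i + n)%nat (fiter X f n i x) (fiter X f n i y) < eps)) as [d [Hd Hd']].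
    + intros i e e' Hp He' n x y Hy. apply Hp. lra.
    + intros i _. apply fiter_equi; auto.
    + exists d. split; auto. intros n x.
      assert (H : forall i, {O | U (i+n)%nat O /\
                 forall y, ball (rho (i+n)%nat) (fiter X f n i x) eps y -> O y}).
      { intros i. apply constructive_indefinite_description. apply HL. }
      exists (fun x' => forall i, (i < m)%nat -> proj1_sig (H i) (fiter X f n i x')).
      split.
      * exists (fun i => proj1_sig (H i)). split; auto.
        intros i _. exact (proj1 (proj2_sig (H i))).
      * intros y Hy i Hi. apply (proj2 (proj2_sig (H i))). unfold ball.
        apply Hd'; auto.
Qed.
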